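(* For all real $\alpha,\beta$, every non-negative integer $r$ and all integers $0\le k\le n$, \[ S_{r\alpha,\beta}(n,k)=B^{(r)}_{n+r,k+r}\big(\langle-\beta\rangle_j;\langle-\alpha\rangle_{j-1}\big), \] i.e. the partial $r$-Bell polynomial evaluated at $a_j=\langle-\beta\rangle_j$, $b_j=\langle-\alpha\rangle_{j-1}$ ($j\ge1$). Consequently, when $\beta\neq0$, $P_n^{(r\alpha,\beta)}(x)=\sum_{k=0}^{n}B^{(r)}_{n+r,k+r}\big(\langle-\beta\rangle_j;\langle-\alpha\rangle_{j-1}\big)x^k$.
   Context: For real $a$ and integer $n\ge 1$, $\langle a\rangle_n:=a(a+1)\cdots(a+n-1)$ and $\langle a\rangle_0:=1$. For real $\alpha,\beta$ and integers $0\le k\le n$, $S_{\alpha,\beta}(n,k):=\frac{1}{k!}\sum_{j=0}^{k}(-1)^{k-j}\binom{k}{j}\langle-\alpha-\beta j\rangle_n$. For real $\alpha,\beta$ with $\beta\neq0$, $P_n^{(\alpha,\beta)}(x)$ are defined by $\sum_{n\ge0}P_n^{(\alpha,\beta)}(x)\frac{t^n}{n!}=(1-t)^{\alpha}\exp\big(x((1-t)^{\beta}-1)\big)$. For sequences $(a_j)_{j\ge1},(b_j)_{j\ge1}$ and integers $r,k\ge0$, the partial $r$-Bell polynomials $B^{(r)}_{n+r,k+r}(a_j;b_j)$, $n\ge k$, are defined by $\sum_{n\ge k}B^{(r)}_{n+r,k+r}(a_j;b_j)\frac{t^n}{n!}=\frac{1}{k!}\Big(\sum_{j\ge1}a_j\frac{t^j}{j!}\Big)^k\Big(\sum_{j\ge0}b_{j+1}\frac{t^j}{j!}\Big)^r$.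 *)

(* Defs.v *)
From HB Require Import structures.
From mathcomp Require Import all_boot all_order all_algebra.
Set Implicit Arguments. Unset Strict Implicit. Unset Printing Implicit Defensive.
Import Order.TTheory GRing.Theory Num.Theory.
Local Open Scope ring_scope.

Section Defs.
Variable R : realFieldType.

Definition rising (a : R) (n : nat) : R := \prod_(i < n) (a + i%:R).

Definition Sab (al be : R) (n k : nat) : R :=
  (k`!%:R)^-1 * \sum_(j < k.+1)
     ((-1) ^+ (k - j) * 'C(k, j)%:R * rising (- al - be * j%:R) n).

(* formal power series in t, given by their coefficient sequences *)
Definition fps := nat -> R.
Definition fps_one : fps := fun n => (n == 0%N)%:R.
Definition fps_mul (f g : fps) : fps :=
  fun n => \sum_(i < n.+1) f i * g (n - i)%N.
Definition fps_pow (f : fps) (m : nat) : fps := iter m (fps_mul f) fps_one.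

(* partial r-Bell polynomial B^{(r)}_{n+r,k+r}(a_j; b_j):
   n! times the t^n-coefficient of
   (1/k!) (sum_{j>=1} a_j t^j/j!)^k (sum_{j>=0} b_{j+1} t^j/j!)^r *)
Definition egf_a (a : nat -> R) : fps :=
  fun j => if j is 0 then 0 else a j / (j`!)%:R.
Definition egf_b (b : nat -> R) : fps := fun j => b j.+1 / (j`!)%:R.
Definition rBell (r : nat) (a b : nat -> R) (n k : nat) : R :=
  (n`!)%:R * ((k`!%:R)^-1 *
     fps_mul (fps_pow (egf_a a) k) (fps_pow (egf_b b) r) n).

(* binomial series (1 - t)^al = sum_n (-1)^n binom(al, n) t^n,
   binom(al, n) = al(al-1)...(al-n+1)/n! *)
Definition binom_ser (al : R) : fps :=
  fun n => (-1) ^+ n * ((\prod_(i < n) (al - i%:R)) / (n`!)%:R).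

(* exp(x g(t)) for a series g with g_0 = 0:  sum_m x^m g^m / m!
   (the t^n coefficient only involves m <= n since g^m = O(t^m)) *)
Definition exp_comp (x : R) (g : fps) : fps :=
  fun n => \sum_(m < n.+1) (x ^+ m / (m`!)%:R * fps_pow g m n).

(* P_n^{(al,be)}(x) : n! times the t^n coefficient of
   (1-t)^al exp(x((1-t)^be - 1)) *)
Definition Pab (al be x : R) (n : nat) : R :=
  (n`!)%:R * fps_mul (binom_ser al)
     (exp_comp x (fun j => binom_ser be j - fps_one j)) n.

End Defs.

(* Main.v *)
Set Warnings "-all".
Require Import Defs.
From HB Require Import structures.
From mathcomp Require Import all_boot all_order all_algebra.
From mathcomp Require Import ring zify.
From Stdlib Require Import FunctionalExtensionality.
Import Order.TTheory GRing.Theory Num.Theory.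
Local Open Scope ring_scope.

Section S.
Variable R : realFieldType.
Local Notation c := (@binom_ser R).

Lemma c0 (a : R) : c a 0 = 1.
Proof. by rewrite /binom_ser big_ord0 expr0 mul1r divr1. Qed.

Lemma fact_neq0 n : (n`!)%:R != 0 :> R.
Proof. by rewrite pnatr_eq0 -lt0n fact_gt0. Qed.

Lemma nat1_neq0 n : (n.+1)%:R != 0 :> R.
Proof. by rewrite pnatr_eq0. Qed.

Lemma cS (a : R) n : (n.+1)%:R * c a n.+1 = (n%:R - a) * c a n.
Proof.
rewrite /binom_ser big_ord_recr /= factS natrM exprS.
have h1 := fact_neq0 n; have h2 := nat1_neq0 n.
by field; rewrite h1 nat1r h2.
Qed.

Lemma c_uniq (a : R) (d : nat -> R) : d 0%N = 1 ->
  (forall n, (n.+1)%:R * d n.+1 = (n%:R - a) * d n) -> forall n, d n = c a n.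
Proof.
move=> d0 dS; elim=> [|n IH]; first by rewrite d0 c0.
apply: (mulfI (nat1_neq0 n)); by rewrite dS cS IH.
Qed.

Lemma c_rising (a : R) n : c a n = rising (- a) n / (n`!)%:R.
Proof.
rewrite /binom_ser /rising mulrA; congr (_ / _).
elim: n => [|n IH]; first by rewrite !big_ord0 expr0 mul1r.
rewrite !big_ord_recr /= exprS -IH; ring.
Qed.

Lemma vander (a b : R) n : fps_mul (c a) (c b) n = c (a + b) n.
Proof.
move: n; apply: (@c_uniq (a + b) (fun n => fps_mul (c a) (c b) n)) => [|n].
  by rewrite /fps_mul big_ord_recl big_ord0 addr0 !c0 mulr1.
rewrite /fps_mul.
have E : forall i : 'I_n.+2, (n.+1)%:R * (c a i * c b (n.+1 - i)%N) =
   (i%:R * c a i) * c b (n.+1 - i)%N + c a i * ((n.+1 - i)%N%:R * c b (n.+1 - i)%N).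
  move=> i; have hi : (i <= n.+1)%N by rewrite -ltnS.
  rewrite -{1}(subnKC hi) natrD; ring.
rewrite mulr_sumr (eq_bigr _ (fun i _ => E i)) big_split /=.
rewrite [X in X + _ = _]big_ord_recl [X in _ + X = _]big_ord_recr /=.
rewrite subnn !mul0r mulr0 add0r addr0.
rewrite mulr_sumr -big_split /=; apply: eq_bigr => i _.
rewrite /bump /= add1n subSS cS.
have hi : (i <= n)%N by rewrite -ltnS.
rewrite (subSn hi) cS.
have -> : n%:R = i%:R + (n - i)%N%:R :> R by rewrite -natrD subnKC.
ring.
Qed.
Lemma one_c n : fps_one R n = c 0 n.
Proof.
move: n; apply: (@c_uniq 0 (fps_one R)) => [|n]; first by [].
by rewrite /fps_one /= mulr0 subr0; case: n => [|n]; rewrite ?mul0r ?mulr0.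
Qed.

Lemma pow_c (a : R) r n : fps_pow (c a) r n = c (r%:R * a) n.
Proof.
elim: r n => [|r IH] n; first by rewrite mul0r /fps_pow /= one_c.
rewrite /fps_pow /= -/(fps_pow (c a) r).
have -> : r.+1%:R * a = a + r%:R * a by rewrite -add1n natrD mulrDl mul1r.
rewrite -vander /fps_mul; apply: eq_bigr => i _; by rewrite IH.
Qed.

Lemma mul_ext (f h h' : fps R) n : (forall m, h m = h' m) ->
  fps_mul f h n = fps_mul f h' n.
Proof. by move=> E; apply: eq_bigr => i _; rewrite E. Qed.

Lemma mul_lin (f : fps R) K (w : nat -> R) (h : nat -> fps R) n :
  fps_mul f (fun m => \sum_(j < K) w j * h j m) n
  = \sum_(j < K) w j * fps_mul f (h j) n.
Proof.
rewrite /fps_mul; under eq_bigr => i _ do rewrite mulr_sumr.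
rewrite exchange_big /=.
apply: eq_bigr => j _; rewrite mulr_sumr; apply: eq_bigr => i _; ring.
Qed.

Lemma mul_g (b : R) (h : fps R) n :
  fps_mul (fun j => c b j - fps_one R j) h n = fps_mul (c b) h n - h n.
Proof.
rewrite /fps_mul (eq_bigr _ (fun i _ => mulrBl _ _ _)) sumrB; congr (_ - _).
rewrite big_ord_recl /= subn0 /fps_one /= mul1r big1 ?addr0 // => i _.
by rewrite mul0r.
Qed.

Definition w k j : R := (-1) ^+ (k - j) * 'C(k, j)%:R.

Lemma pascal k (e : nat -> R) :
  \sum_(j < k.+1) w k j * (e j.+1 - e j) = \sum_(j < k.+2) w k.+1 j * e j.
Proof.
under eq_bigr => j _ do rewrite mulrBr.
rewrite sumrB [X in _ = X]big_ord_recl /=.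
under [X in _ = _ + X]eq_bigr => j _ do rewrite /w /bump /= add1n binS natrD subSS mulrDr mulrDl.
rewrite big_split /= [X in _ = _ + (X + _)]big_ord_recr /= bin_small // mulr0 mul0r addr0.
rewrite [X in _ - X = _]big_ord_recl /= /w /bump /= !bin0 !subn0.
have H : \sum_(i < k) (-1) ^+ (k - i) * 'C(k, i.+1)%:R * e i.+1 =
  - \sum_(i < k) (-1) ^+ (k - (1 + i)) * 'C(k, 1 + i)%:R * e (1 + i)%N.
  rewrite -sumrN; apply: eq_bigr => i _.
  by rewrite add1n -(subnSK (ltn_ord i)) exprS; ring.
rewrite H exprS; ring.
Qed.
Definition gg (b : R) : fps R := fun j => c b j - fps_one R j.

Lemma gpow (b : R) k n :
  fps_pow (gg b) k n = \sum_(j < k.+1) w k j * c (j%:R * b) n.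
Proof.
elim: k n => [|k IH] n.
  by rewrite big_ord1 /w /= mul0r expr0 mul1r mul1r /fps_pow /= one_c.
rewrite /fps_pow /= -/(fps_pow (gg b) k).
rewrite (@mul_ext _ _ (fun m => \sum_(j < k.+1) w k j * c (j%:R * b) m) _ IH).
rewrite (mul_lin _ _ (w k) (fun j => c (j%:R * b))) -(pascal k (fun j => c (j%:R * b) n)); apply: eq_bigr => j _ /=.
rewrite /gg mul_g vander; congr (_ * (c _ _ - _)).
by rewrite -[in RHS]add1n natrD mulrDl mul1r.
Qed.

Lemma gpow_small (b : R) m p : (p < m)%N -> fps_pow (gg b) m p = 0.
Proof.
elim: m p => [|m IH] p //= hp.
rewrite /fps_mul big_ord_recl /= {1}/gg c0 /fps_one /= subrr mul0r add0r.
apply: big1 => i _; rewrite IH ?mulr0 //.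
rewrite /bump /= add1n; move: hp; rewrite ltnS => hp.
by have := ltn_ord i; lia.
Qed.
Lemma mul_comm (f h : fps R) n : fps_mul f h n = fps_mul h f n.
Proof.
rewrite /fps_mul (reindex_inj rev_ord_inj) /=; apply: eq_bigr => i _ /=.
by rewrite subSS subKn ?leq_ord // mulrC.
Qed.

Lemma ext_sum (N N' : nat) (F : nat -> R) : (N <= N')%N ->
  (forall m, (N <= m)%N -> (m < N')%N -> F m = 0) ->
  \sum_(m < N) F m = \sum_(m < N') F m.
Proof.
move=> le H; rewrite (big_ord_widen N' F le) big_mkcond /=.
apply: eq_bigr => i _; case: ifP => // /negbT; rewrite -leqNgt => h.
by rewrite H.
Qed.

Lemma egfa (be : R) : egf_a (fun j => rising (- be) j) = gg be.
Proof.
apply: functional_extensionality => j; rewrite /egf_a /gg.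
case: j => [|j]; first by rewrite c0 /fps_one subrr.
by rewrite c_rising /fps_one /= subr0.
Qed.

Lemma egfb (al : R) : egf_b (fun j => rising (- al) j.-1) = c al.
Proof.
by apply: functional_extensionality => j; rewrite /egf_b c_rising.
Qed.

Lemma rBell_eq (al be : R) r n k :
  rBell r (fun j => rising (- be) j) (fun j => rising (- al) j.-1) n k
  = (n`!)%:R * ((k`!%:R)^-1 * fps_mul (c (r%:R * al)) (fps_pow (gg be) k) n).
Proof.
rewrite /rBell egfa egfb mul_comm; congr (_ * (_ * _)).
by apply: eq_bigr => i _; rewrite pow_c.
Qed.
End S.

Theorem proposition4 (R : realFieldType) (al be : R) (r n : nat) :
  (forall k : nat, (k <= n)%N ->
     Sab (r%:R * al) be n k
     = rBell r (fun j => rising (- be) j) (fun j => rising (- al) j.-1) n k)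
  /\
  (be != 0 -> forall x : R,
     Pab (r%:R * al) be x n
     = \sum_(k < n.+1)
         rBell r (fun j => rising (- be) j) (fun j => rising (- al) j.-1) n k
         * x ^+ k).
Proof.
split.
  move=> k _; rewrite rBell_eq.
  rewrite (mul_ext _ _ _ (fun m => \sum_(j < k.+1) w R k j * binom_ser (j%:R * be) m) _ (gpow _ be k)).
  rewrite (mul_lin _ _ _ (w R k) (fun j => binom_ser (j%:R * be))).
  rewrite /Sab mulrCA !mulr_sumr; apply: eq_bigr => j _.
  rewrite vander c_rising /w.
  have -> : - (r%:R * al + j%:R * be) = - (r%:R * al) - be * j%:R by ring.
  have := fact_neq0 R n; move=> h; by field; rewrite h fact_neq0.
move=> _ x.
rewrite /Pab -/(gg _ be).
transitivity ((n`!)%:R * fps_mul (binom_ser (r%:R * al))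
   (fun p => \sum_(m < n.+1) (x ^+ m / (m`!)%:R) * fps_pow (gg _ be) m p) n).
  congr (_ * _); apply: eq_bigr => i _; congr (_ * _); rewrite /exp_comp.
  apply: (ext_sum _ _ _ (fun m => x ^+ m / (m`!)%:R * fps_pow (gg _ be) m (n - i)%N)) => [|m hm _]; first by rewrite ltnS leq_subr.
  by rewrite gpow_small ?mulr0.
rewrite (mul_lin _ _ _ (fun m => x ^+ m / (m`!)%:R) (fun m => fps_pow (gg _ be) m)).
rewrite mulr_sumr; apply: eq_bigr => k _; rewrite rBell_eq; ring.
Qed.
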